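(* Let $F=\breve F(\alpha_1,\dots,\alpha_t)$ be a fence. (1) If $x,y\in\breve S_i$ for some $i\in[t]$, then $\chi_x-\chi_y\equiv 0$. (2) If $\alpha_i=2$ for all $i\in[t]$, then $\chi\equiv t/2$, where $\chi=\sum_{q\in F}\chi_q$.
   Context: Fences: let $\alpha=(\alpha_1,\dots,\alpha_t)$ be positive integers with $t\ge2$ and $\alpha_1,\alpha_t\ge2$. Put $a_0=0$, $a_i=\alpha_1+\dots+\alpha_i$, $n=a_t-1$. The fence $\breve F(\alpha)$ is the poset on $\{x_1,\dots,x_n\}$ whose cover relations are: for $1\le j\le n-1$ with $a_{i-1}\le j<a_i$, $x_j\lessdot x_{j+1}$ if $i$ is odd and $x_j\gtrdot x_{j+1}$ if $i$ is even. Segments: $S_1=\{x_j:1\le j\le a_1\}$, $S_i=\{x_j:a_{i-1}\le j\le a_i\}$ for $2\le i\le t-1$, $S_t=\{x_j:a_{t-1}\le j\le n\}$. Shared elements are $x_{a_i}$, $i\in[t-1]$; $\breve S_i$ is the set of non-shared elements of $S_i$. $\mathcal J(F)$ is the set of order ideals. For $q\in F$, $I\in\mathcal J(F)$: $\chi_q(I)=1$ if $q\in\max(I)$, else $0$; $T_q(I)=1$ if $q\in\min(F\setminus I)$, $-1$ if $q\in\max(I)$, $0$ otherwise. For functions $f,g:\mathcal J(F)\to\mathbb R$, $f\equiv g$ means $f-g=\sum_{q\in F}c_qT_q$ for some real constants $c_q$; a real number $c$ also denotes the constant function $c$. *)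

(* Defs.v *)
From HB Require Import structures.
From mathcomp Require Import all_boot all_order all_algebra.
From mathcomp Require Import reals.
Set Implicit Arguments. Unset Strict Implicit. Unset Printing Implicit Defensive.
Import Order.TTheory GRing.Theory Num.Theory.

(* Fences  F(alpha),  alpha = [:: alpha_1; ...; alpha_t].
   Element x_j (1 <= j <= n) is represented by k : 'I_n with j = k + 1. *)

Section Fence.
Variable alpha : seq nat.

Definition fa (i : nat) : nat := \sum_(k < i) nth 0 alpha k.
Definition ft : nat := size alpha.
Definition fn : nat := (fa ft).-1.

(* the segment index i with a_{i-1} <= j < a_i  (for 1 <= j < a_t) *)
Definition segidx (j : nat) : nat := (count (fun m => fa m <= j) (iota 1 ft)).+1.

Definition fcover : rel 'I_fn := fun u v =>
  ((val v == (val u).+1) && odd (segidx (val u).+1))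
  || ((val u == (val v).+1) && ~~ odd (segidx (val v).+1)).

Definition fle (u v : 'I_fn) : bool := connect fcover u v.
Definition flt (u v : 'I_fn) : bool := (u != v) && fle u v.

Definition is_ideal (I : {set 'I_fn}) : Prop :=
  forall u v : 'I_fn, fle u v -> v \in I -> u \in I.

Definition in_max (I : {set 'I_fn}) (q : 'I_fn) : bool :=
  (q \in I) && [forall p, flt q p ==> (p \notin I)].
Definition in_min_compl (I : {set 'I_fn}) (q : 'I_fn) : bool :=
  (q \notin I) && [forall p, flt p q ==> (p \in I)].

Variable R : realType.
Local Open Scope ring_scope.

Definition chi (q : 'I_fn) (I : {set 'I_fn}) : R :=
  if in_max I q then 1 else 0.
Definition Tq (q : 'I_fn) (I : {set 'I_fn}) : R :=
  if in_min_compl I q then 1 else if in_max I q then -1 else 0.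

Definition fequiv (f g : {set 'I_fn} -> R) : Prop :=
  exists c : 'I_fn -> R, forall I, is_ideal I ->
    f I - g I = \sum_(q : 'I_fn) c q * Tq q I.

Definition chi_total (I : {set 'I_fn}) : R := \sum_(q : 'I_fn) chi q I.

End Fence.

Definition in_seg (alpha : seq nat) (i j : nat) : bool :=
  (fa alpha i.-1 <= j) && (j <= fa alpha i).
(* x_j is a non-shared element of S_i, i.e. x_j \in breve S_i *)
Definition in_bseg (alpha : seq nat) (i j : nat) : bool :=
  in_seg alpha i j && all (fun m => j != fa alpha m) (iota 1 (ft alpha).-1).

(* Main.v *)
Require Import Defs.
From HB Require Import structures.
From mathcomp Require Import all_boot all_order all_algebra.
From mathcomp Require Import reals.
From mathcomp Require Import zify lra.
Set Implicit Arguments. Unset Strict Implicit. Unset Printing Implicit Defensive.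
Import Order.TTheory GRing.Theory Num.Theory.
Local Open Scope ring_scope.

Section Gen.
Variable alpha : seq nat.
Local Notation n := (fn alpha).
Local Notation t := (size alpha).
Local Notation fcover := (@fcover alpha).
Local Notation flt := (@flt alpha).
Local Notation fle := (@fle alpha).
Local Notation is_ideal := (@is_ideal alpha).
Local Notation in_max := (@in_max alpha).
Local Notation in_min_compl := (@in_min_compl alpha).

Definition U (k : nat) : bool := odd (segidx alpha k.+1).
Definition bI (I : {set 'I_n}) (k : nat) : bool :=
  [exists r : 'I_n, (val r == k) && (r \in I)].

Lemma bI_val (I : {set 'I_n}) (r : 'I_n) : bI I (val r) = (r \in I).
Proof.
apply/existsP/idP => [[r' /andP[/eqP/val_inj -> //]]| h].
by exists r; rewrite eqxx.
Qed.

Lemma bI_ge (I : {set 'I_n}) k : (n <= k)%N -> bI I k = false.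
Proof.
move=> h; apply/existsP => -[r /andP[/eqP e _]].
by move: (ltn_ord r); rewrite e ltnNge h.
Qed.

Lemma fcover_neq (u v : 'I_n) : fcover u v -> u != v.
Proof.
rewrite /fcover => /orP[/andP[/eqP e _]|/andP[/eqP e _]];
  apply/negP => /eqP uv; subst; lia.
Qed.

Lemma cover_lt (u v : 'I_n) : fcover u v -> flt u v.
Proof. by move=> h; rewrite /flt fcover_neq // /fle connect1. Qed.

Lemma flt_first (p q : 'I_n) : flt q p -> exists2 r, fcover q r & fle r p.
Proof.
rewrite /flt /fle => /andP[qp /connectP[[|r s] /= hp ep]].
  by rewrite ep eqxx in qp.
case/andP: hp => qr hp; exists r => //; apply/connectP; by exists s.
Qed.

Lemma flt_last (p q : 'I_n) : flt p q -> exists2 r, fle p r & fcover r q.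
Proof.
rewrite /flt /fle => /andP[pq /connectP[s hp e]].
elim/last_ind: s hp e => [|s r _] hp e; first by rewrite /= e eqxx in pq.
rewrite rcons_path in hp; case/andP: hp => hp hr; rewrite last_rcons in e; subst.
exists (last p s) => //; by apply/connectP; exists s.
Qed.

Lemma max_forall (I : {set 'I_n}) q : is_ideal I -> q \in I ->
  [forall p, flt q p ==> (p \notin I)] = [forall r, fcover q r ==> (r \notin I)].
Proof.
move=> hI qI; apply/forallP/forallP => h r; apply/implyP => hr.
- by move: (h r) => /implyP; apply; apply: cover_lt.
- case: (flt_first hr) => s qs sr; apply/negP => rI.
  by move: (h s) => /implyP /(_ qs); rewrite (hI _ _ sr rI).
Qed.

Lemma min_forall (I : {set 'I_n}) q : is_ideal I ->
  [forall p, flt p q ==> (p \in I)] = [forall r, fcover r q ==> (r \in I)].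
Proof.
move=> hI; apply/forallP/forallP => h r; apply/implyP => hr.
- by move: (h r) => /implyP; apply; apply: cover_lt.
- case: (flt_last hr) => s rs sq; apply: hI _ _ rs _; by move: (h s) => /implyP /(_ sq).
Qed.

Lemma fcoverE (u v : 'I_n) :
  fcover u v = ((val v == (val u).+1) && U (val u)) || ((val u == (val v).+1) && ~~ U (val v)).
Proof. by []. Qed.

Lemma upcoversE (I : {set 'I_n}) (q : 'I_n) : [forall r, fcover q r ==> (r \notin I)] =
  ~~ (U q && bI I (val q).+1) && ~~ [&& 0 < val q, ~~ U (val q).-1 & bI I (val q).-1]%N.
Proof.
apply/forallP/andP => [h|[h1 h2] r].
- split.
  + apply/negP => /andP[Uq /existsP[r /andP[/eqP rq rI]]].
    by move: (h r); rewrite fcoverE rq eqxx Uq rI.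
  + apply/negP => /and3P[q0 Uq' /existsP[r /andP[/eqP rq rI]]].
    move: (h r); rewrite fcoverE rq (prednK q0) eqxx Uq' rI.
    by rewrite orbT.
- apply/implyP; rewrite fcoverE => /orP[/andP[/eqP rq Uq]|/andP[/eqP qr Ur]].
  + apply/negP => rI; move: h1; by rewrite Uq -rq bI_val rI.
  + move: h2; rewrite qr -pred_Sn Ur bI_val; by [].
Qed.

Lemma lowcoversE (I : {set 'I_n}) (q : 'I_n) : [forall r, fcover r q ==> (r \in I)] =
  (((val q).+1 < n)%N && ~~ U q ==> bI I (val q).+1) &&
  ((0 < val q) && U (val q).-1 ==> bI I (val q).-1)%N.
Proof.
apply/forallP/andP => [h|[h1 h2] r].
- split; apply/implyP.
  + move=> /andP[qn Uq]; move: (h (Ordinal qn)).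
    rewrite fcoverE -[val (Ordinal qn)]/(val q).+1 eqxx Uq orbT.
    by rewrite -(bI_val I (Ordinal qn)).
  + move=> /andP[q0 Uq].
    have qn : ((val q).-1 < n)%N by exact: leq_ltn_trans (leq_pred _) (ltn_ord q).
    move: (h (Ordinal qn)); rewrite fcoverE -[val (Ordinal qn)]/(val q).-1 (prednK q0) eqxx Uq.
    by rewrite -(bI_val I (Ordinal qn)).
- apply/implyP; rewrite fcoverE => /orP[/andP[/eqP qr Ur]|/andP[/eqP rq Uq]].
  + move: h2; by rewrite qr -pred_Sn Ur bI_val.
  + move: h1; by rewrite -rq ltn_ord Uq bI_val.
Qed.

Lemma in_maxE (I : {set 'I_n}) (q : 'I_n) : is_ideal I -> in_max I q =
  [&& bI I q, ~~ (U q && bI I (val q).+1) &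
      ~~ [&& 0 < val q, ~~ U (val q).-1 & bI I (val q).-1]%N].
Proof.
move=> hI; rewrite /in_max bI_val; case qI: (q \in I) => //=.
by rewrite max_forall // upcoversE.
Qed.

Lemma in_minE (I : {set 'I_n}) (q : 'I_n) : is_ideal I -> in_min_compl I q =
  [&& ~~ bI I q, (((val q).+1 < n)%N && ~~ U q ==> bI I (val q).+1) &
  ((0 < val q) && U (val q).-1 ==> bI I (val q).-1)%N].
Proof. by move=> hI; rewrite /in_min_compl bI_val min_forall // lowcoversE. Qed.

Lemma ideal_up (I : {set 'I_n}) k : is_ideal I -> U k -> bI I k.+1 -> bI I k.
Proof.
move=> hI Uk /existsP[r /andP[/eqP rk rI]].
have kn : (k < n)%N by rewrite (leq_ltn_trans _ (ltn_ord r)) // rk.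
rewrite -[k]/(val (Ordinal kn)) bI_val; apply: (hI _ r) rI.
by apply: connect1; rewrite fcoverE rk eqxx [val (Ordinal kn)]/= Uk.
Qed.

Lemma ideal_down (I : {set 'I_n}) k : is_ideal I -> ~~ U k -> (k.+1 < n)%N -> bI I k -> bI I k.+1.
Proof.
move=> hI Uk kn /existsP[r /andP[/eqP rk rI]].
rewrite -[k.+1]/(val (Ordinal kn)) bI_val; apply: (hI _ r) rI.
by apply: connect1; rewrite fcoverE rk [val (Ordinal kn)]/= eqxx Uk orbT.
Qed.


Arguments U : simpl never.
Arguments bI : simpl never.

Variable R : realType.
Local Notation chi := (@chi alpha R).
Local Notation Tq := (@Tq alpha R).

Lemma consec_up (I : {set 'I_n}) (u v : 'I_n) : is_ideal I -> val v = (val u).+1 ->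
  U (val u) -> (0 < val u -> U (val u).-1)%N -> ((val v).+1 < n -> U (val v))%N ->
  chi u I - chi v I = Tq v I.
Proof.
move=> hI e Uu h0 h1.
have ev : nat_of_ord v = (val u).+1 := e.
have eu : nat_of_ord u = val u := erefl.
rewrite /Tq /Defs.chi !in_maxE // in_minE // ?eu e ev -pred_Sn Uu.
rewrite e in h1.
have -> : [&& 0 < val u, ~~ U (val u).-1 & bI I (val u).-1]%N = false.
  by case: (posnP (val u)) => [->|/h0 ->] //; rewrite andbF.
have -> : (((val u).+2 < n)%N && ~~ U (val u).+1 ==> bI I (val u).+2) = true.
  by apply/implyP => /andP[/h1 ->].
have hu := ideal_up hI Uu.
case: (bI I (val u).+1) hu => [/(_ isT) ->|_]; case: (bI I (val u));
  case: (U _ && _) => /=; lra.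
Qed.

Lemma consec_down (I : {set 'I_n}) (u v : 'I_n) : is_ideal I -> val v = (val u).+1 ->
  ~~ U (val u) -> (0 < val u -> ~~ U (val u).-1)%N -> ((val v).+1 < n -> ~~ U (val v))%N ->
  chi u I - chi v I = - Tq u I.
Proof.
move=> hI e Uu h0 h1.
have ev : nat_of_ord v = (val u).+1 := e.
have eu : nat_of_ord u = val u := erefl.
rewrite /Tq /Defs.chi !in_maxE // in_minE // ?eu e ev -pred_Sn (negbTE Uu).
rewrite e in h1.
have -> : ~~ (U (val u).+1 && bI I (val u).+2) = true.
  case: (ltnP (val u).+2 n) => [/h1 /negbTE -> //| hn]; by rewrite (bI_ge _ hn) andbF.
have vn : ((val u).+1 < n)%N by rewrite -e ltn_ord.
rewrite vn.
have -> : ((0 < val u) && U (val u).-1 ==> bI I (val u).-1)%N = true.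
  by case: (posnP (val u)) => [->|/h0 /negbTE ->].
move: [&& (0 < val u)%N, ~~ U (val u).-1 & bI I (val u).-1] => X.
case: (bI I (val u).+1); case: (bI I (val u)); case: X => /=; lra.
Qed.

Definition Z (f : {set 'I_n} -> R) : Prop :=
  exists c : 'I_n -> R, forall I, is_ideal I -> f I = \sum_(q : 'I_n) c q * Tq q I.

Lemma ZE f : Z f -> fequiv f (fun _ => 0).
Proof. by case=> c h; exists c => I hI; rewrite subr0 h. Qed.

Lemma Z_single f (v : 'I_n) : (forall I, is_ideal I -> f I = Tq v I) -> Z f.
Proof.
move=> h; exists (fun q => (q == v)%:R) => I hI; rewrite h //.
rewrite (bigD1 v) //= eqxx mul1r big1 ?addr0 // => q /negbTE ->; by rewrite mul0r.
Qed.

Lemma Z_opp f : Z f -> Z (fun I => - f I).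
Proof.
case=> c h; exists (fun q => - c q) => I hI; rewrite h // -sumrN.
by apply: eq_bigr => q _; rewrite mulNr.
Qed.

Lemma Z_add f g : Z f -> Z g -> Z (fun I => f I + g I).
Proof.
case=> c h [d k]; exists (fun q => c q + d q) => I hI; rewrite h // k // -big_split.
by apply: eq_bigr => q _; rewrite mulrDl.
Qed.

Lemma Z_ext f g : (forall I, is_ideal I -> f I = g I) -> Z f -> Z g.
Proof. by move=> e [c h]; exists c => I hI; rewrite -e // h. Qed.


Lemma Z_T (v : 'I_n) : Z (fun I => Tq v I).
Proof. exact: Z_single. Qed.

Lemma Z_NT (v : 'I_n) : Z (fun I => - Tq v I).
Proof. exact: Z_opp (Z_T v). Qed.

Lemma ltn_val (x : 'I_n) : (val x < n)%N.
Proof. exact: ltn_ord. Qed.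

Lemma faS i : fa alpha i.+1 = (fa alpha i + nth 0 alpha i)%N.
Proof. by rewrite /fa big_ord_recr. Qed.

Lemma fa0 : fa alpha 0 = 0%N.
Proof. by rewrite /fa big_ord0. Qed.

Lemma fa_mono i j : (i <= j)%N -> (fa alpha i <= fa alpha j)%N.
Proof.
move=> /subnK <-; elim: (j - i)%N => [|d IH] //.
by rewrite addSn faS (leq_trans IH) // leq_addr.
Qed.

Lemma segidxE i k : (1 <= i <= t)%N -> (fa alpha i.-1 <= k < fa alpha i)%N ->
  segidx alpha k = i.
Proof.
move=> /andP[i1 it] /andP[lo hi]; rewrite /segidx /ft.
have e : t = (i.-1 + (t - i.-1))%N by lia.
rewrite e iotaD count_cat.
rewrite (@eq_in_count _ _ predT); last first.
  move=> m; rewrite mem_iota => /andP[_ hm] /=; apply: leq_trans lo; apply: fa_mono; lia.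
rewrite count_predT size_iota (@eq_in_count _ _ pred0) ?count_pred0.
  by rewrite addn0 prednK.
move=> m; rewrite mem_iota => /andP[hm _] /=; apply/negbTE; rewrite -ltnNge.
apply: leq_trans hi _; apply: fa_mono; lia.
Qed.

Lemma bseg_bounds i (x : 'I_n) : (1 <= i <= t)%N -> in_bseg alpha i (val x).+1 ->
  (fa alpha i.-1 < (val x).+1 < fa alpha i)%N.
Proof.
move=> /andP[i1 it] /andP[/andP[lo hi] /allP hs].
apply/andP; split.
- case: (ltnP 1 i) => [i2|i1'].
  + have : i.-1 \in iota 1 (ft alpha).-1 by rewrite mem_iota /ft; lia.
    move/hs => /= ne; by rewrite ltn_neqAle lo andbT eq_sym.
  + have -> : i.-1 = 0%N by lia.
    by rewrite fa0.
- case: (ltnP i t) => [i2|i1'].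
  + have : i \in iota 1 (ft alpha).-1 by rewrite mem_iota /ft; lia.
    move/hs => /= ne; by rewrite ltn_neqAle hi andbT ne.
  + have -> : i = t by lia.
    have := ltn_val x; rewrite /fn /ft; lia.
Qed.

Lemma part1_chain i : (1 <= i <= t)%N -> forall d (x y : 'I_n), val y = (val x + d)%N ->
  (fa alpha i.-1 < (val x).+1)%N -> ((val y).+1 < fa alpha i)%N ->
  Z (fun I => chi x I - chi y I).
Proof.
move=> hi; elim=> [|d IH] x y e lo up.
- have -> : y = x by apply: val_inj; rewrite e addn0.
  apply: (@Z_ext (fun _ => 0)); first by move=> I _; rewrite subrr.
  by exists (fun _ => 0) => I _; rewrite big1 // => q _; rewrite mul0r.
- have yn : (val x + d < n)%N by have := ltn_val y; lia.
  pose y' := Ordinal yn.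
  have ey' : val y' = (val x + d)%N := erefl.
  have Z1 := IH x y' erefl lo (_ : _ ).
  have ey : val y = (val y').+1 by rewrite e ey' addnS.
  have hU : forall k, ((val y').-1 <= k <= val y)%N -> U k = odd i.
    move=> k hk; rewrite /U (segidxE hi) //; lia.
  have Z2 : Z (fun I => chi y' I - chi y I).
    case oi: (odd i).
    + apply: Z_ext (Z_T y) => I hI; apply/esym/consec_up => //.
      * rewrite hU ?oi //; lia.
      * move=> _; rewrite hU ?oi //; lia.
      * move=> _; rewrite hU ?oi //; lia.
    + apply: Z_ext (Z_NT y') => I hI; apply/esym/consec_down => //.
      * rewrite hU ?oi //; lia.
      * move=> _; rewrite hU ?oi //; lia.
      * move=> _; rewrite hU ?oi //; lia.
  have Z1' : Z (fun I => chi x I - chi y' I) by apply: Z1; lia.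
  apply: Z_ext (Z_add Z1' Z2) => I _; by rewrite addrA subrK.
Qed.

Lemma part1 i (x y : 'I_n) : (1 <= i <= t)%N -> in_bseg alpha i (val x).+1 ->
  in_bseg alpha i (val y).+1 -> Z (fun I => chi x I - chi y I).
Proof.
move=> hi hx hy; have /andP[lx ux] := bseg_bounds hi hx.
have /andP[ly uy] := bseg_bounds hi hy.
case: (leqP (val x) (val y)) => h.
- by apply: (part1_chain hi (d := (val y - val x)%N)) => //; lia.
- have hc := part1_chain hi (d := (val x - val y)%N) (x := y) (y := x).
  have hc' : Z (fun I => chi y I - chi x I) by apply: hc => //; lia.
  by apply: Z_ext (Z_opp hc') => I _; rewrite opprB.
Qed.

End Gen.

Lemma oddE m : odd m = (m %% 2 == 1)%N.
Proof. by rewrite modn2; case: (odd m). Qed.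

Ltac fin := repeat match goal with |- context [bI ?I ?k] => case: (bI I k) end;
  rewrite /= ?andbF ?andbT /=; move=> *; (done || lra).

Section Two.
Variable alpha : seq nat.
Variable R : realType.
Local Notation n := (fn alpha).
Local Notation t := (size alpha).
Local Notation U := (@U alpha).
Local Notation bI := (@bI alpha).
Local Notation chi := (@chi alpha R).
Local Notation Tq := (@Tq alpha R).
Local Notation is_ideal := (@is_ideal alpha).

Variable h2 : all (fun a => a == 2)%N alpha.
Variable t2 : (2 <= t)%N.

Lemma nth2 k : (k < t)%N -> nth 0 alpha k = 2%N.
Proof. by move=> kt; apply/eqP; exact: (all_nthP 0 h2). Qed.

Lemma fa2 i : fa alpha i = (2 * minn i t)%N.
Proof.
elim: i => [|i IH]; first by rewrite fa0 min0n.
rewrite faS IH; case: (ltnP i t) => it.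
- rewrite nth2 //; lia.
- rewrite nth_default //; lia.
Qed.

Lemma n2 : n = (2 * t).-1.
Proof. by rewrite /fn fa2 /ft minnn. Qed.

Lemma U2 k : (k < n)%N -> U k = (k %% 4 == 0)%N || (k %% 4 == 3)%N.
Proof.
move=> kn; have := n2 => nE.
have -> : U k = odd (segidx alpha k.+1) by [].
rewrite (@segidxE alpha (k.+1 %/ 2).+1); last first.
  by rewrite -pred_Sn !fa2; lia.
  by lia.
rewrite oddE.
have r4 : (k %% 4 < 4)%N by rewrite ltn_mod.
case e: (k %% 4)%N r4 => [|[|[|[|r]]]] // _; apply/eqP => /=; lia.
Qed.

Definition c2 (q : nat) : R := if (q %% 4 == 1)%N then 0 else if (q %% 4 == 3)%N then -1 else (-1) / 2.
Definition kap (q : nat) : R := if (q %% 4 == 3)%N then 1 else 0.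
Definition Bv (I : {set 'I_n}) (k : nat) : R :=
  if (k == 0)%N then 1 else if (k == n) then (if odd t then 0 else 1)
  else (if bI I (if odd k then k else k.-1) then 1 else 0).
Definition Phi (I : {set 'I_n}) (k : nat) : R :=
  (if (k %% 4 < 2)%N then -1 else 1) * Bv I k / 2.

Lemma BvS I k : Bv I k.+1 = if (k.+1 == n) then (if odd t then 0 else 1)
  else (if bI I (if odd k then k else k.+1) then 1 else 0).
Proof. by rewrite /Bv /=; case: (k.+1 == n) => //; case: (odd k). Qed.

Lemma BvP I k : (0 < k < n)%N -> Bv I k = if bI I (if odd k then k else k.-1) then 1 else 0.
Proof. by move=> /andP[kp kn]; rewrite /Bv eqn0Ngt kp /= ltn_eqF. Qed.

Lemma Bv0 I : Bv I 0 = 1.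
Proof. by []. Qed.


Lemma local2 (I : {set 'I_n}) (q : 'I_n) : is_ideal I ->
  chi q I - c2 (val q) * Tq q I = Phi I (val q).+1 - Phi I (val q) + kap (val q).
Proof.
move=> hI.
have eu : nat_of_ord q = val q := erefl.
rewrite /Defs.chi /Tq in_maxE // in_minE // ?eu.
have kn := ltn_val q.
move: (val q) kn => k kn.
have nE := n2.
have hup := ideal_up hI; have hdown := ideal_down hI.
rewrite /Phi /c2 /kap BvS (U2 kn).
have r4 : (k %% 4 < 4)%N by rewrite ltn_mod.
have Ukm : (0 < k)%N -> U k.-1 = (k.-1 %% 4 == 0)%N || (k.-1 %% 4 == 3)%N.
  by move=> _; apply: U2; lia.
have Uk : U k = (k %% 4 == 0)%N || (k %% 4 == 3)%N by rewrite U2.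
case e: (k %% 4)%N r4 => [|[|[|[|r]]]] // _ /=; rewrite e /= in Uk.
- have -> : (k.+1 %% 4 = 1)%N by lia.
  rewrite [odd k]oddE (_ : (k %% 2 = 0)%N) /=; last by lia.
  have c1 : bI I k.+1 ==> bI I k by apply/implyP; exact: hup.
  case: (posnP k) => [k0|kp].
  + subst k; rewrite Bv0 (_ : (1 == n) = false) /=; last by lia.
    move: c1; fin.
  + rewrite (Ukm kp) (_ : (k.-1 %% 4 = 3)%N) /=; last by lia.
    rewrite BvP ?kp ?kn // [odd k]oddE (_ : (k %% 2 = 0)%N) /=; last by lia.
    have c0 : bI I k ==> bI I k.-1.
      by apply/implyP => h; apply: hup; [rewrite Ukm // (_ : (k.-1 %% 4 = 3)%N) //; lia | rewrite prednK].
    case: (eqVneq k.+1 n) => en.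
    * rewrite (_ : odd t = true); last by rewrite oddE; lia.
      rewrite (@bI_ge alpha I k.+1); last by rewrite en.
      move: c0; fin.
    * move: c0 c1; fin.
- have kp : (0 < k)%N by lia.
  have -> : (k.+1 %% 4 = 2)%N by lia.
  rewrite [odd k]oddE (_ : (k %% 2 = 1)%N) /=; last by lia.
  rewrite (Ukm kp) (_ : (k.-1 %% 4 = 0)%N) /=; last by lia.
  rewrite BvP ?kp ?kn // [odd k]oddE (_ : (k %% 2 = 1)%N) /=; last by lia.
  rewrite (_ : (k.+1 == n) = false) /=; last by lia.
  fin.
- have kp : (0 < k)%N by lia.
  have -> : (k.+1 %% 4 = 3)%N by lia.
  rewrite [odd k]oddE (_ : (k %% 2 = 0)%N) /=; last by lia.
  rewrite (Ukm kp) (_ : (k.-1 %% 4 = 1)%N) /=; last by lia.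
  rewrite BvP ?kp ?kn // [odd k]oddE (_ : (k %% 2 = 0)%N) /=; last by lia.
  have c0 : bI I k.-1 ==> bI I k.
    apply/implyP => h; rewrite -[k in bI I k](prednK kp); apply: hdown => //.
      by rewrite Ukm // (_ : (k.-1 %% 4 = 1)%N) //; lia.
    by rewrite prednK.
  case: (eqVneq k.+1 n) => en.
  * rewrite (_ : odd t = false); last by rewrite oddE; lia.
    rewrite (_ : (k.+1 < n)%N = false) /=; last by lia.
    move: c0; fin.
  * have c1 : bI I k ==> bI I k.+1.
      by apply/implyP; apply: hdown => //; lia.
    rewrite (_ : (k.+1 < n)%N = true) /=; last by lia.
    move: c0 c1; fin.
- have kp : (0 < k)%N by lia.
  have -> : (k.+1 %% 4 = 0)%N by lia.
  rewrite [odd k]oddE (_ : (k %% 2 = 1)%N) /=; last by lia.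
  rewrite (Ukm kp) (_ : (k.-1 %% 4 = 2)%N) /=; last by lia.
  rewrite BvP ?kp ?kn // [odd k]oddE (_ : (k %% 2 = 1)%N) /=; last by lia.
  rewrite (_ : (k.+1 == n) = false) /=; last by lia.
  fin.
Qed.


Lemma kap_sum m : \sum_(0 <= k < m) kap k = (m %/ 4)%:R.
Proof.
elim: m => [|m IH]; first by rewrite big_geq // div0n.
rewrite big_nat_recr //= IH /kap.
case: (eqVneq (m %% 4)%N 3%N) => h.
- by rewrite (_ : (m.+1 %/ 4 = m %/ 4 + 1)%N) ?natrD //; lia.
- by rewrite (_ : (m.+1 %/ 4 = m %/ 4)%N) ?addr0 //; lia.
Qed.

Lemma part2 : fequiv (chi_total R (alpha:=alpha)) (fun _ => t%:R / 2).
Proof.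
exists (fun q => c2 (val q)) => I hI.
have S : \sum_(q : 'I_n) (chi q I - c2 (val q) * Tq q I) = t%:R / 2.
  rewrite (eq_bigr (fun q : 'I_n => Phi I (nat_of_ord q).+1 - Phi I (nat_of_ord q) + kap (nat_of_ord q))); last first.
    by move=> q _; exact: local2.
  rewrite big_split /= -(big_mkord xpredT (fun k => Phi I k.+1 - Phi I k)) -(big_mkord xpredT kap).
  rewrite telescope_sumr // kap_sum /Phi Bv0 /Bv eqxx mod0n /=.
  have nE := n2.
  rewrite (_ : (n == 0)%N = false); last by lia.
  case ot: (odd t); move: ot; rewrite oddE.
  - move/eqP => ot.
    rewrite (_ : (n %% 4 < 2)%N = true); last by lia.
    have hk : (2 * (n %/ 4) + 1 = t)%N by lia.
    rewrite -[in RHS]hk natrD natrM /=; lra.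
  - move/negbT/eqP => ot.
    rewrite (_ : (n %% 4 < 2)%N = false); last by lia.
    have hk : (2 * (n %/ 4) + 2 = t)%N by lia.
    rewrite -[in RHS]hk natrD natrM /=; lra.
rewrite /chi_total; move: S; rewrite sumrB => S; lra.
Qed.

End Two.

Theorem corollary3p2 (R : realType) (alpha : seq nat) :
  (2 <= size alpha)%N ->
  all (fun a => 0 < a)%N alpha ->
  (2 <= head 0 alpha)%N ->
  (2 <= last 0 alpha)%N ->
  (forall (i : nat) (x y : 'I_(fn alpha)),
      (1 <= i <= size alpha)%N ->
      in_bseg alpha i (val x).+1 -> in_bseg alpha i (val y).+1 ->
      fequiv (fun I => chi R x I - chi R y I) (fun _ => 0))
  /\
  (all (fun a => a == 2)%N alpha ->
      fequiv (chi_total R (alpha:=alpha)) (fun _ => (size alpha)%:R / 2)).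
Proof.
move=> t2 _ _ _; split.
- move=> i x y hi hx hy; apply: ZE; exact: part1 hi hx hy.
- move=> h2; exact: part2.
Qed.
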